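(* Strong Nash equilibria need not exist in the Sharing with Friendship game. Specifically, consider the instance with: - $n=4$ players; - friendship graph $G$ with edge set $\{\{1,2\},\{3,4\}\}$; - $m=2$ machines with values $p_1=2+\epsilon$ and $p_2=4+3\epsilon$. For a suitable $\epsilon>0$ (e.g. any sufficiently small $\epsilon>0$), this instance has no strong Nash equilibrium.
   Context: An instance of the Sharing with Friendship game consists of: - players $N=\{1,\dots,n\}$; - machines $M=\{1,\dots,m\}$ with values $p_1,\dots,p_m\ge0$; - a simple undirected graph $G=(N,E)$. A state is $\vec s\in M^n$, with $X_k(\vec s)=\{i:s_i=k\}$ and $x_k(\vec s)=|X_k(\vec s)|$. The utility of player $i$ with $s_i=k$ is $$u_i(\vec s)=\frac{p_k}{x_k(\vec s)}+\#\{j\in X_k(\vec s):\{i,j\}\in E\}.$$ A state $\vec s$ is a strong Nash equilibrium if for every nonempty coalition $C\subseteq N$ and every joint deviation $\vec s_C'\in M^C$, some $i\in C$ has $u_i(\vec s)\ge u_i(\vec s_C',\vec s_{-C})$. *)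

(* Defs.v *)
From HB Require Import structures.
From mathcomp Require Import all_boot all_order all_algebra.
Set Implicit Arguments. Unset Strict Implicit. Unset Printing Implicit Defensive.
Import Order.TTheory GRing.Theory Num.Theory.
Local Open Scope ring_scope.

(* Sharing with Friendship game: players 'I_n, machines 'I_m (0-indexed),
   machine values p : 'I_m -> R, friendship graph given by a relation e
   on players (for a simple graph: symmetric and irreflexive). *)

Definition state (n m : nat) := {ffun 'I_n -> 'I_m}.

Definition load (n m : nat) (s : state n m) (k : 'I_m) : nat :=
  #|[set i | s i == k]|.

Definition utility (R : realFieldType) (n m : nat) (p : 'I_m -> R)
    (e : rel 'I_n) (s : state n m) (i : 'I_n) : R :=
  p (s i) / (load s (s i))%:R + (#|[set j | (s j == s i) && e i j]|)%:R.

Definition deviate (n m : nat) (s : state n m) (C : {set 'I_n})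
    (s' : state n m) : state n m :=
  [ffun i => if i \in C then s' i else s i].

Definition strong_NE (R : realFieldType) (n m : nat) (p : 'I_m -> R)
    (e : rel 'I_n) (s : state n m) : Prop :=
  forall (C : {set 'I_n}), C != set0 -> forall s' : state n m,
    exists2 i, i \in C & utility p e (deviate s C s') i <= utility p e s i.

(* The instance: players 1..4 are 0..3; edges {1,2},{3,4} become {0,1},{2,3}. *)
Definition friend4 : rel 'I_4 :=
  fun i j => ((val i == 0%N) && (val j == 1%N)) || ((val i == 1%N) && (val j == 0%N))
          || ((val i == 2%N) && (val j == 3%N)) || ((val i == 3%N) && (val j == 2%N)).

Definition vals2 (R : realFieldType) (eps : R) : 'I_2 -> R :=
  fun k => if val k == 0%N then 2 + eps else 4 + 3 * eps.

(* Main.v *)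
Require Import Defs.
From HB Require Import structures.
From mathcomp Require Import all_boot all_order all_algebra.
From mathcomp Require Import lra.
Import Order.TTheory GRing.Theory Num.Theory.
Local Open Scope ring_scope.

Definition mk (a b c d : 'I_2) : state 4 2 := [ffun i : 'I_4 => nth a [:: a; b; c; d] i].

Lemma card4 (P : pred 'I_4) : #|[set j | P j]| =
  (P ord0 + P (lift ord0 ord0) + P (lift ord0 (lift ord0 ord0)) + P (lift ord0 (lift ord0 (lift ord0 ord0))))%N.
Proof.
rewrite cardsE -sum1_card big_mkcond /= !big_ord_recl big_ord0 /=.
have E : forall x, (x \in P) = P x by []. rewrite !E; by case: (P ord0); case: (P (lift _ _)); case: (P (lift _ (lift _ _))); case: (P (lift _ (lift _ (lift _ _)))); rewrite ?addn0.
Qed.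

Lemma block (R : realFieldType) (p : 'I_2 -> R) (s : state 4 2) (C : {set 'I_4}) (k : 'I_2) :
  C != set0 ->
  (forall i, i \in C -> utility p friend4 s i < utility p friend4 (deviate s C [ffun=> k]) i) ->
  ~ strong_NE p friend4 s.
Proof.
move=> C0 H /(_ C C0 [ffun=> k]) [i iC]; apply/negP; rewrite -ltNge; exact: H.
Qed.


Notation o1 := (@Ordinal 4 1 isT).
Notation o2 := (@Ordinal 4 2 isT).
Notation o3 := (@Ordinal 4 3 isT).

Ltac blk C k w :=
  apply: (@block _ _ _ C k);
  [ apply/set0Pn; exists w; rewrite !inE eqxx ?orbT //
  | let i := fresh "i" in let Hi := fresh "Hi" in
    move=> i; rewrite !inE; case: i => -[|[|[|[|//]]]] Hi //= _;
    rewrite /utility /load /vals2 /deviate !card4 !ffunE !inE /= !addnE /=; lra ].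

Theorem theorem20 (R : realFieldType) :
  exists2 delta : R, 0 < delta &
    forall eps : R, 0 < eps -> eps < delta ->
      forall s : state 4 2, ~ strong_NE (vals2 eps) friend4 s.
Proof.
exists (1/20); first lra.
move=> e e0 e1 s.
have -> : s = mk (s ord0) (s o1) (s o2) (s o3).
  by apply/ffunP => -[[|[|[|[|//]]]] Hi]; rewrite ffunE /=; congr (s _); apply/val_inj.
case: (s ord0) => -[|[|//]] Ha; case: (s o1) => -[|[|//]] Hb;
case: (s o2) => -[|[|//]] Hc; case: (s o3) => -[|[|//]] Hd.
 - blk [set @ord0 3] (@ord_max 1) (@ord0 3).
 - blk [set @ord0 3] (@ord_max 1) (@ord0 3).
 - blk [set @ord0 3] (@ord_max 1) (@ord0 3).
 - blk [set @ord0 3;(@Ordinal 4 1 isT)] (@ord_max 1) (@ord0 3).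
 - blk [set @ord0 3] (@ord_max 1) (@ord0 3).
 - blk [set @ord0 3] (@ord_max 1) (@ord0 3).
 - blk [set @ord0 3] (@ord_max 1) (@ord0 3).
 - blk [set (@Ordinal 4 1 isT)] (@ord0 1) (@Ordinal 4 1 isT).
 - blk [set (@Ordinal 4 1 isT)] (@ord_max 1) (@Ordinal 4 1 isT).
 - blk [set (@Ordinal 4 1 isT)] (@ord_max 1) (@Ordinal 4 1 isT).
 - blk [set (@Ordinal 4 1 isT)] (@ord_max 1) (@Ordinal 4 1 isT).
 - blk [set @ord0 3] (@ord0 1) (@ord0 3).
 - blk [set (@Ordinal 4 2 isT);(@Ordinal 4 3 isT)] (@ord_max 1) (@Ordinal 4 2 isT).
 - blk [set (@Ordinal 4 3 isT)] (@ord0 1) (@Ordinal 4 3 isT).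
 - blk [set (@Ordinal 4 2 isT)] (@ord0 1) (@Ordinal 4 2 isT).
 - blk [set @ord0 3] (@ord0 1) (@ord0 3).
Qed.
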